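(* Consider an iteration of the sig-cGA optimizing $\mathrm{DLB}$ in which the current frequency vector $\tau$ lies in $\{\frac12,1-\frac1n\}^n$. Then for every $i\in[1..n]$, a $1$ is appended to the history $H_i$ in this iteration (i.e., the winner $z$ has $z_i=1$) with probability at least $\tau_i$.
   Context: Let $n$ be an even positive integer. For $x\in\{0,1\}^n$ consider the blocks $(x_{2\ell+1},x_{2\ell+2})$, $\ell=0,\dots,\frac n2-1$. If $x\neq(1,\dots,1)$, let $m$ be the smallest $\ell$ with $x_{2\ell+1}\neq 1$ or $x_{2\ell+2}\neq 1$, and define $\mathrm{DLB}(x)=2m+1$ if $x_{2m+1}+x_{2m+2}=0$ and $\mathrm{DLB}(x)=2m$ if $x_{2m+1}+x_{2m+2}=1$; set $\mathrm{DLB}(1,\dots,1)=n$. In an iteration of the sig-cGA with current frequency vector $\tau$, two individuals $x,y$ are sampled independently, each bit $j$ being $1$ independently with probability $\tau_j$; the winner $z$ is the one with larger $\mathrm{DLB}$-value (chosen uniformly at random in case of a tie); then for each $i$ the bit $z_i$ is appended to the history $H_i$ (after which the frequencies are possibly updated). *)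

(* Defs.v *)
From HB Require Import structures.
From mathcomp Require Import all_boot all_order all_algebra.
Set Implicit Arguments. Unset Strict Implicit. Unset Printing Implicit Defensive.
Import Order.TTheory GRing.Theory Num.Theory.
Local Open Scope ring_scope.

(* DLB on a bit string given as a sequence (x_1, x_2, ..., x_n), scanning
   blocks (x_{2l+1}, x_{2l+2}); m counts the number of leading (1,1)-blocks. *)
Fixpoint dlb_aux (m : nat) (s : seq bool) : nat :=
  match s with
  | a :: b :: t =>
      if a && b then dlb_aux m.+1 t
      else if ~~ a && ~~ b then (2 * m).+1
      else (2 * m)%N
  | _ => (2 * m)%N (* all blocks are (1,1): value 2*(n/2) = n for even n *)
  end.

(* x : {0,1}^n, with x (i : 'I_n) being the bit x_{i+1}. *)
Definition DLB (n : nat) (x : {ffun 'I_n -> bool}) : nat :=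
  dlb_aux 0 [seq x i | i <- enum 'I_n].

Definition sample_prob (R : realFieldType) (n : nat) (tau : 'I_n -> R)
    (x : {ffun 'I_n -> bool}) : R :=
  \prod_(j < n) (if x j then tau j else 1 - tau j).

(* Probability that the winner z of the duel between x and y has z_i = 1
   (winner = larger DLB value, uniformly random on ties). *)
Definition winner_bit_prob (R : realFieldType) (n : nat) (i : 'I_n)
    (x y : {ffun 'I_n -> bool}) : R :=
  if (DLB y < DLB x)%N then (x i)%:R
  else if (DLB x < DLB y)%N then (y i)%:R
  else ((x i)%:R + (y i)%:R) / 2.

(* Probability that, in one sig-cGA iteration on DLB with frequency vector tau,
   a 1 is appended to the history H_i. *)
Definition prob_append_one (R : realFieldType) (n : nat) (tau : 'I_n -> R)
    (i : 'I_n) : R :=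
  \sum_(x : {ffun 'I_n -> bool}) \sum_(y : {ffun 'I_n -> bool})
     sample_prob tau x * sample_prob tau y * winner_bit_prob R i x y.

(* Main.v *)
Require Import Defs.
From HB Require Import structures.
From mathcomp Require Import all_boot all_order all_algebra.
From mathcomp Require Import zify ring lra.
Import Order.TTheory GRing.Theory Num.Theory.
Set Implicit Arguments. Unset Strict Implicit. Unset Printing Implicit Defensive.
Local Open Scope ring_scope.

Lemma dlb_shift (k : nat) (s : seq bool) (m : nat) :
  (size s <= k)%N -> dlb_aux m s = (2 * m + dlb_aux 0 s)%N.
Proof.
elim: k s m => [|k IH] [|a [|b t]] m //=; try lia.
move=> hs; case: (a && b); last by case: (~~ a && ~~ b); lia.
rewrite (IH t m.+1) ?(IH t 1); lia.
Qed.

Lemma dlb_app (l m : nat) (s1 t : seq bool) : size s1 = (2 * l)%N ->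
  dlb_aux m (s1 ++ t) = (if all id s1 then dlb_aux (m + l) t else dlb_aux m s1)
  /\ (~~ all id s1 -> (dlb_aux m s1 < 2 * (m + l))%N).
Proof.
elim: l m s1 => [|l IH] m [|a [|b s1]] //=; try lia.
  by rewrite addn0.
move=> hs; have hs' : size s1 = (2 * l)%N by lia.
have [a1 a2] := IH m.+1 s1 hs'.
case: a; case: b => /=; rewrite ?a1 ?addSnnS //; split => //; try lia.
Qed.

Definition om (R : realFieldType) (p : R) (a : bool) : R := if a then p else 1 - p.
Definition upd (n : nat) (x : {ffun 'I_n -> bool}) (k : 'I_n) (a : bool)
  : {ffun 'I_n -> bool} := [ffun j => if j == k then a else x j].

Lemma upd_id n (x : {ffun 'I_n -> bool}) k : upd x k (x k) = x.
Proof. by apply/ffunP => j; rewrite ffunE; case: eqP => // ->. Qed.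

Lemma upd_upd n (x : {ffun 'I_n -> bool}) k a b : upd (upd x k b) k a = upd x k a.
Proof. by apply/ffunP => j; rewrite !ffunE; case: eqP. Qed.

Lemma sum_split (R : realFieldType) n (H : {ffun 'I_n -> bool} -> R) k :
  \sum_(x : {ffun 'I_n -> bool}) H x = \sum_(a : bool) \sum_(x : {ffun 'I_n -> bool} | x k == false) H (upd x k a).
Proof.
rewrite big_bool /= [LHS](bigID (fun x : {ffun 'I_n -> bool} => x k)) /=; congr (_ + _); last first.
  apply: eq_big => [x|x hx]; first by case: (x k).
  have hf : false = x k by move: hx; case: (x k).
  by rewrite [in RHS]hf upd_id.
pose f (x : {ffun 'I_n -> bool}) := upd x k (~~ x k).
have finj : injective f.
  move=> x y hxy; apply/ffunP => j; have := congr1 (fun z : {ffun 'I_n -> bool} => z j) hxy.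
  rewrite !ffunE; case: eqP => [->|//]; by case: (x k); case: (y k).
rewrite (reindex_inj finj) /=; apply: eq_big => [x|x].
  by rewrite /f ffunE eqxx; case: (x k).
by move=> hx; move: hx; rewrite /f ffunE eqxx; case: (x k).
Qed.

Lemma w_upd (R : realFieldType) n (tau : 'I_n -> R) (x : {ffun 'I_n -> bool}) k a :
  sample_prob tau (upd x k a) = om (tau k) a * \prod_(j | j != k) om (tau j) (x j).
Proof.
rewrite /sample_prob (bigD1 k) //= ffunE eqxx; congr (_ * _).
by apply: eq_bigr => j /negbTE hj; rewrite ffunE hj.
Qed.

Lemma om_sum (R : realFieldType) (p : R) : \sum_(b : bool) om p b = 1.
Proof. by rewrite big_bool /om /= addrC subrK. Qed.

Lemma resample (R : realFieldType) n (tau : 'I_n -> R) k (F : {ffun 'I_n -> bool} -> R) :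
  \sum_x sample_prob tau x * F x =
  \sum_x sample_prob tau x * (\sum_(a : bool) om (tau k) a * F (upd x k a)).
Proof.
pose r (x : {ffun 'I_n -> bool}) := \prod_(j | j != k) om (tau j) (x j).
pose C := \sum_(x : {ffun 'I_n -> bool} | x k == false) r x * (\sum_(a : bool) om (tau k) a * F (upd x k a)).
rewrite (sum_split (fun x => sample_prob tau x * F x) k).
rewrite (sum_split (fun x => sample_prob tau x * _) k).
transitivity C.
  rewrite exchange_big /=; apply: eq_bigr => x _; rewrite big_distrr /=.
  by apply: eq_bigr => a _; rewrite w_upd -/(r x); ring.
transitivity (\sum_(b : bool) om (tau k) b * C); last first.
  apply: eq_bigr => b _; rewrite /C big_distrr /=; apply: eq_bigr => x _.
  rewrite w_upd -/(r x) -mulrA; congr (_ * (_ * _)).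
  by apply: eq_bigr => a _; rewrite upd_upd.
by rewrite -big_distrl /= om_sum mul1r.
Qed.

Definition bv (A : nat) (P : bool) (d t : nat) (a b : bool) : nat :=
  if P then (if a && b then (A.+2 + t)%N else if ~~ a && ~~ b then A.+1 else A) else d.

Lemma mem_take_enum n A (j : 'I_n) : j \in take A (enum 'I_n) -> (j < A)%N.
Proof.
move=> hj; have : val j \in map val (take A (enum 'I_n)) by apply: map_f.
by rewrite map_take val_enum_ord take_iota mem_iota add0n leq_min => /andP[_] /andP[].
Qed.

Lemma mem_drop_enum n A (j : 'I_n) : j \in drop A (enum 'I_n) -> (A <= j)%N.
Proof.
move=> hj; have : val j \in map val (drop A (enum 'I_n)) by apply: map_f.
by rewrite map_drop val_enum_ord drop_iota mem_iota add0n => /andP[].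
Qed.

Lemma DLB_upd n l (i0 i1 : 'I_n) (x : {ffun 'I_n -> bool}) a b :
  val i0 = (2 * l)%N -> val i1 = (2 * l).+1 ->
  let s := [seq x j | j <- enum 'I_n] in
  DLB (upd (upd x i1 b) i0 a) =
  bv (2 * l) (all id (take (2 * l) s)) (dlb_aux 0 (take (2 * l) s))
     (dlb_aux 0 (drop (2 * l).+2 s)) a b.
Proof.
move=> h0 h1 s; set X := upd (upd x i1 b) i0 a.
have hn : ((2 * l).+1 < n)%N by rewrite -h1 ltn_ord.
have ne : i1 != i0 by apply/eqP => /(congr1 val); rewrite h0 h1; lia.
have sz : size [seq X j | j <- enum 'I_n] = n by rewrite size_map size_enum_ord.
have hs : [seq X j | j <- enum 'I_n] = take (2 * l) s ++ a :: b :: drop (2 * l).+2 s.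
  rewrite -[LHS](cat_take_drop (2 * l)); congr (_ ++ _).
    rewrite /s -(map_take _ (fun j => X j)) -(map_take _ (fun j => x j)); apply/eq_in_map => j hj; have {}hj := mem_take_enum hj.
    rewrite !ffunE; have -> : (j == i0) = false by apply/eqP => e; move: hj; rewrite e h0; lia.
    by have -> : (j == i1) = false by apply/eqP => e; move: hj; rewrite e h1; lia.
  rewrite (drop_nth false) ?sz; last by lia.
  rewrite (drop_nth false) ?sz; last by lia.
  rewrite !(nth_map i0) -?enumT ?size_enum_ord; try lia.
  rewrite -?enumT.
  have -> : nth i0 (enum 'I_n) (2 * l) = i0 by apply: val_inj => /=; rewrite nth_enum_ord ?h0 //; lia.
  have -> : nth i0 (enum 'I_n) (2 * l).+1 = i1 by apply: val_inj => /=; rewrite nth_enum_ord ?h1 //; lia.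
  rewrite /X !ffunE eqxx (negbTE ne) eqxx; congr (_ :: _ :: _).
  rewrite /s -(map_drop _ (fun j => X j)) -(map_drop _ (fun j => x j)); apply/eq_in_map => j hj; have {}hj := mem_drop_enum hj.
  rewrite !ffunE; have -> : (j == i0) = false by apply/eqP => e; move: hj; rewrite e h0; lia.
  by have -> : (j == i1) = false by apply/eqP => e; move: hj; rewrite e h1; lia.
rewrite /DLB hs.
have szt : size (take (2 * l) s) = (2 * l)%N by rewrite size_takel // /s size_map size_enum_ord; lia.
have [-> _] := dlb_app 0 (a :: b :: drop (2 * l).+2 s) szt.
rewrite /bv; case: ifP => // _ /=; rewrite add0n.
case: (a && b); last by case: (~~ a && ~~ b).
rewrite (dlb_shift (k := size (drop (2 * l).+2 s))) //; lia.
Qed.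


Definition Wf (R : realFieldType) (dx dy : nat) (bx by_ : bool) : R :=
  if (dy < dx)%N then (bx : nat)%:R else if (dx < dy)%N then (by_ : nat)%:R
  else ((bx : nat)%:R + (by_ : nat)%:R) / 2.

Lemma eqle (R : realFieldType) (x y : R) : x = y -> x <= y.
Proof. by move=> ->. Qed.

Lemma key (R : realFieldType) (t p q : R) : 2^-1 <= t -> t <= 1 ->
  (p = 2^-1 \/ p = t) -> (q = 2^-1 \/ q = t) ->
  p <= 2 * p * q - p * p * q * q + p * (1 - q) * (p * (1 - q) + q * (1 - p)).
Proof.
move=> t1 t2 hp hq.
have H1 : 0 <= t * (1 - t) by apply: mulr_ge0; lra.
have H2 : 0 <= 3 * t - t * t - 1.
  have := mulr_ge0 (_ : 0 <= t - 2^-1) (_ : 0 <= 1 - t); lra.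
have H3 := mulr_ge0 H1 H2.
case: hp => ->; case: hq => ->; nra.
Qed.

Lemma pw (R : realFieldType) (p0 p1 t : R) (A : nat) (Px Py : bool) (dx dy tx ty : nat) (sel : bool) :
  2^-1 <= t <= 1 -> (p0 = 2^-1 \/ p0 = t) -> (p1 = 2^-1 \/ p1 = t) ->
  (~~ Px -> (dx < A)%N) -> (~~ Py -> (dy < A)%N) ->
  (if sel then p0 else p1) <=
  \sum_(b : bool) om p1 b * \sum_(a : bool) om p0 a * \sum_(e : bool) om p1 e * \sum_(c : bool) om p0 c *
     Wf R (bv A Px dx tx a b) (bv A Py dy ty c e) (if sel then a else b) (if sel then c else e).
Proof.
move=> /andP[t1 t2] hp0 hp1 hx hy.
have c1 : (A.+1 < A)%N = false by lia.
have c2 : (A < A.+1)%N = true by lia.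
have c3 : (A < A)%N = false by lia.
have c4 : (A.+1 < A.+1)%N = false by lia.
have c5 : forall u, (A.+2 + u < A)%N = false by lia.
have c6 : forall u, (A < A.+2 + u)%N = true by lia.
have c7 : forall u, (A.+2 + u < A.+1)%N = false by lia.
have c8 : forall u, (A.+1 < A.+2 + u)%N = true by lia.
rewrite !big_bool /om /bv /Wf /=.
case: Px hx => [_|/(_ isT) hx]; case: Py hy => [_|/(_ isT) hy];
 rewrite ?c1 ?c2 ?c3 ?c4 ?c5 ?c6 ?c7 ?c8.
all: try (have d1 : (dx < A.+1)%N by lia); try (have d2 : (dx < A.+2 + ty)%N by lia);
     try (have d3 : (dy < A.+1)%N by lia); try (have d4 : (dy < A.+2 + tx)%N by lia).
all: rewrite ?hx ?hy ?d1 ?d2 ?d3 ?d4.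
all: try (have e1 : (A < dx)%N = false by lia); try (have e2 : (A.+1 < dx)%N = false by lia);
     try (have e3 : (A.+2 + ty < dx)%N = false by lia).
all: try (have f1 : (A < dy)%N = false by lia); try (have f2 : (A.+1 < dy)%N = false by lia);
     try (have f3 : (A.+2 + tx < dy)%N = false by lia).
all: rewrite ?e1 ?e2 ?e3 ?f1 ?f2 ?f3.
all: repeat (case: ifP => _).
all: rewrite ?mulr1n ?mulr0n.
all: have h11 : (1 + 1) / 2 = 1 :> R by field.
all: have h10 : (1 + 0) / 2 = 2^-1 :> R by field.
all: have h01 : (0 + 1) / 2 = 2^-1 :> R by field.
all: have h00 : (0 + 0) / 2 = 0 :> R by field.
all: rewrite ?h11 ?h10 ?h01 ?h00.
all: try (apply: eqle; case: sel; field).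
all: try done.
all: case: sel.
all: first [ apply: le_trans (key t1 t2 hp0 hp1) _ | apply: le_trans (key t1 t2 hp1 hp0) _ ].
all: apply: eqle; field.
all: try done.
Qed.


Lemma resample2 (R : realFieldType) n (tau : 'I_n -> R) (i0 i1 : 'I_n) (F : {ffun 'I_n -> bool} -> R) :
  \sum_x sample_prob tau x * F x =
  \sum_x sample_prob tau x * (\sum_(b : bool) om (tau i1) b *
      \sum_(a : bool) om (tau i0) a * F (upd (upd x i1 b) i0 a)).
Proof.
by rewrite (resample tau i0 F) (resample tau i1 (fun x => \sum_(a : bool) om (tau i0) a * F (upd x i0 a))).
Qed.

Lemma xch (R : realFieldType) (I J : finType) (f : I -> R) (g : J -> R) (F : I -> J -> R) :
  \sum_i f i * (\sum_j g j * F i j) = \sum_j g j * (\sum_i f i * F i j).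
Proof.
under eq_bigr => i _ do rewrite big_distrr /=.
rewrite exchange_big /=; apply: eq_bigr => j _; rewrite big_distrr /=.
by apply: eq_bigr => i _; rewrite mulrCA.
Qed.

Lemma sum_w (R : realFieldType) n (tau : 'I_n -> R) : \sum_x sample_prob tau x = 1.
Proof.
rewrite /sample_prob -(bigA_distr_bigA (fun j b => om (tau j) b)) /=.
by rewrite big1 // => j _; rewrite om_sum.
Qed.

Lemma w_ge0 (R : realFieldType) n (tau : 'I_n -> R) x :
  (forall j, 0 <= tau j <= 1) -> 0 <= sample_prob tau x.
Proof.
move=> h; rewrite /sample_prob; apply: prodr_ge0 => j _.
by have /andP[h1 h2] := h j; case: (x j); lra.
Qed.

Unset Implicit Arguments.

Theorem corollary22 (R : realFieldType) (n : nat) (tau : 'I_n -> R) :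
  (0 < n)%N -> ~~ odd n ->
  (forall j : 'I_n, tau j = 2^-1 \/ tau j = 1 - (n%:R)^-1) ->
  forall i : 'I_n, tau i <= prob_append_one tau i.
Proof.
move=> hn hev htau i.
set t := 1 - (n%:R : R)^-1.
have hn' := odd_double_half n.
rewrite (negbTE hev) /= in hn'.
have hn2 : (2 <= n)%N by lia.
have t1 : 2^-1 <= t.
  have h : (n%:R : R)^-1 <= 2^-1.
    by rewrite lef_pV2 ?posrE ?ltr0n ?ler_nat.
  rewrite /t; lra.
have t2 : t <= 1 by rewrite /t; have := invr_ge0 (n%:R : R); rewrite ler0n /=; lra.
have tb : forall j, 0 <= tau j <= 1 by move=> j; case: (htau j) => ->; rewrite -/t; apply/andP; split; lra.
set l := i./2.
have hi := odd_double_half i.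
have iln := ltn_ord i.
have lt0 : (2 * l < n)%N by lia.
have lt1 : ((2 * l).+1 < n)%N by lia.
pose i0 : 'I_n := Ordinal lt0.
pose i1 : 'I_n := Ordinal lt1.
have ne : i0 != i1 by apply/eqP => /(congr1 val) /=; lia.
pose sel := (i == i0).
have hsel : forall (x : {ffun 'I_n -> bool}) (a b : bool),
    (upd (upd x i1 b) i0 a) i = if sel then a else b.
  move=> x a b; rewrite !ffunE /sel; case: eqP => // /eqP hi0.
  suff -> : i == i1 by [].
  apply/eqP/val_inj => /=; move: hi0; rewrite -(inj_eq val_inj) /=; lia.
have hti : tau i = if sel then tau i0 else tau i1.
  rewrite /sel; case: eqP => [->//|/eqP hi0].
  suff -> : i = i1 by [].
  apply/val_inj => /=; move: hi0; rewrite -(inj_eq val_inj) /=; lia.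
have h0 : val i0 = (2 * l)%N by [].
have h1 : val i1 = (2 * l).+1 by [].
have hxlt : forall x : {ffun 'I_n -> bool},
   let s := [seq x j | j <- enum 'I_n] in
   ~~ all id (take (2 * l) s) -> (dlb_aux 0 (take (2 * l) s) < 2 * l)%N.
  move=> x s; have szt : size (take (2 * l) s) = (2 * l)%N.
    by rewrite size_takel // /s size_map size_enum_ord; lia.
  by have [_ h] := dlb_app 0 [::] szt; move=> /h; rewrite add0n.
have tt1 : 2^-1 <= t <= 1 by rewrite t1 t2.
have hW : forall X Y, winner_bit_prob R i X Y = Wf R (DLB X) (DLB Y) (X i) (Y i) by [].
pose W x y := winner_bit_prob R i x y.
pose w := sample_prob tau.
pose G (x : {ffun 'I_n -> bool}) := \sum_y w y * W x y.
have hG : forall X, G X = \sum_y w y * (\sum_(e : bool) om (tau i1) e *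
      \sum_(c : bool) om (tau i0) c * W X (upd (upd y i1 e) i0 c)).
  by move=> X; rewrite /G (resample2 tau i0 i1 (fun y => W X y)).
have step1 : prob_append_one tau i = \sum_x w x * G x.
  rewrite /prob_append_one; apply: eq_bigr => x _; rewrite /G big_distrr /=.
  by apply: eq_bigr => y _; rewrite mulrA.
rewrite step1 (resample2 tau i0 i1 G).
rewrite -[tau i]mul1r -(sum_w tau) big_distrl /=.
apply: ler_sum => x _; apply: ler_wpM2l; first exact: w_ge0.
set K := fun (a b : bool) (y : {ffun 'I_n -> bool}) => \sum_(e : bool) om (tau i1) e *
      \sum_(c : bool) om (tau i0) c * W (upd (upd x i1 b) i0 a) (upd (upd y i1 e) i0 c).
have e1 : \sum_(b : bool) om (tau i1) b * (\sum_(a : bool) om (tau i0) a * G (upd (upd x i1 b) i0 a))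
   = \sum_y w y * (\sum_(b : bool) om (tau i1) b * (\sum_(a : bool) om (tau i0) a * K a b y)).
  transitivity (\sum_(b : bool) om (tau i1) b * (\sum_(a : bool) om (tau i0) a * \sum_y w y * K a b y)).
    by apply: eq_bigr => b _; congr (_ * _); apply: eq_bigr => a _; rewrite hG.
  under eq_bigr => b _ do rewrite xch.
  by rewrite xch.
rewrite e1 -[tau i]mul1r -(sum_w tau) big_distrl /=.
apply: ler_sum => y _; apply: ler_wpM2l; first exact: w_ge0.
rewrite hti.
apply: le_trans (pw (A := (2 * l)%N) (dlb_aux 0 (drop (2 * l).+2 [seq x j | j <- enum 'I_n]))
   (dlb_aux 0 (drop (2 * l).+2 [seq y j | j <- enum 'I_n])) sel tt1 (htau i0) (htau i1) (hxlt x) (hxlt y)) _.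
apply: eqle; apply: eq_bigr => b _; congr (_ * _); apply: eq_bigr => a _; congr (_ * _).
apply: eq_bigr => e _; congr (_ * _); apply: eq_bigr => c _; congr (_ * _).
by rewrite /W hW !(DLB_upd _ _ _ h0 h1) !hsel.
Qed.
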